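(* Let $u$ be a smooth, nowhere vanishing solution of the DNLS equation $\mathrm{i}u_t+u_{xx}+2\mathrm{i}(|u|^2u)_x=0$, and let $s_1,\alpha_4\in\mathbb{R}$ be such that $\mathbf{L}=-\frac{\mathrm{i}}{8}\mathbf{V}(\mathbf{Q};\lambda)+\frac{\mathrm{i}s_1}{4}\mathbf{U}(\mathbf{Q};\lambda)+\alpha_4\sigma_3$ satisfies $\mathbf{L}_x=[\mathbf{U},\mathbf{L}]$, $\mathbf{L}_t=[\mathbf{V},\mathbf{L}]$ for all $\lambda$. Then $\det\mathbf{L}$ is independent of $(x,t)$ and has the form $\det\mathbf{L}=P(\lambda)=-\lambda^8+s_1\lambda^6-s_2\lambda^4+s_3\lambda^2-s_4$ for constants $s_2,s_3,s_4\in\mathbb{R}$, and $\nu=|u|^2$, viewed as a function of $\xi=x+2s_1t$, satisfies $$\nu_\xi^2=-R(\nu),$$ where $$R(\nu)=\nu^4+4s_1\nu^3+(6s_1^2-8s_2+48\alpha_4)\nu^2+(4s_1^3-16s_1s_2+64s_3+32s_1\alpha_4)\nu+(-s_1^2+4s_2+8\alpha_4)^2.$$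
   Context: $\sigma_3=\mathrm{diag}(1,-1)$, $\mathbf{Q}=\begin{pmatrix}0&\mathrm{i}u\\ \mathrm{i}u^*&0\end{pmatrix}$, $\mathbf{U}(\mathbf{Q};\lambda)=-2\mathrm{i}\sigma_3\lambda^2+2\mathbf{Q}\lambda$, $\mathbf{V}(\mathbf{Q};\lambda)=(4\lambda^2+2\mathbf{Q}^2)\mathbf{U}(\mathbf{Q};\lambda)+2\mathrm{i}\sigma_3\mathbf{Q}_x\lambda$ (the DNLS Lax pair). *)

(* Defs.v *)
From Stdlib Require Import Reals.
From Stdlib Require Import List.
From Coquelicot Require Import Coquelicot.
Open Scope R_scope.

Definition pdx (f : R -> R -> C) : R -> R -> C :=
  fun x t => (Derive (fun y => fst (f y t)) x, Derive (fun y => snd (f y t)) x).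
Definition pdt (f : R -> R -> C) : R -> R -> C :=
  fun x t => (Derive (fun s => fst (f x s)) t, Derive (fun s => snd (f x s)) t).

Definition ex_pdx (f : R -> R -> C) : Prop :=
  forall x t, ex_derive (fun y => fst (f y t)) x /\ ex_derive (fun y => snd (f y t)) x.
Definition ex_pdt (f : R -> R -> C) : Prop :=
  forall x t, ex_derive (fun s => fst (f x s)) t /\ ex_derive (fun s => snd (f x s)) t.

Fixpoint pd_word (w : list bool) (f : R -> R -> C) : R -> R -> C :=
  match w with
  | nil => f
  | b :: w' => if b then pdx (pd_word w' f) else pdt (pd_word w' f)
  end.

Definition smooth2 (f : R -> R -> C) : Prop :=
  forall w : list bool,
    ex_pdx (pd_word w f) /\ ex_pdt (pd_word w f) /\
    (forall x t, continuous (fun p : R * R => pd_word w f (fst p) (snd p)) (x, t)).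

Open Scope C_scope.

Record M2 := mkM2 { m11 : C; m12 : C; m21 : C; m22 : C }.

Definition M2add (A B : M2) : M2 :=
  mkM2 (m11 A + m11 B) (m12 A + m12 B) (m21 A + m21 B) (m22 A + m22 B).
Definition M2sub (A B : M2) : M2 :=
  mkM2 (m11 A - m11 B) (m12 A - m12 B) (m21 A - m21 B) (m22 A - m22 B).
Definition M2scal (c : C) (A : M2) : M2 :=
  mkM2 (c * m11 A) (c * m12 A) (c * m21 A) (c * m22 A).
Definition M2mul (A B : M2) : M2 :=
  mkM2 (m11 A * m11 B + m12 A * m21 B) (m11 A * m12 B + m12 A * m22 B)
       (m21 A * m11 B + m22 A * m21 B) (m21 A * m12 B + m22 A * m22 B).
Definition M2comm (A B : M2) : M2 := M2sub (M2mul A B) (M2mul B A).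
Definition M2det (A : M2) : C := m11 A * m22 A - m12 A * m21 A.

Definition sigma3 : M2 := mkM2 1 0 0 (-1).

Definition M2pdx (F : R -> R -> M2) : R -> R -> M2 :=
  fun x t => mkM2 (pdx (fun y s => m11 (F y s)) x t) (pdx (fun y s => m12 (F y s)) x t)
                  (pdx (fun y s => m21 (F y s)) x t) (pdx (fun y s => m22 (F y s)) x t).
Definition M2pdt (F : R -> R -> M2) : R -> R -> M2 :=
  fun x t => mkM2 (pdt (fun y s => m11 (F y s)) x t) (pdt (fun y s => m12 (F y s)) x t)
                  (pdt (fun y s => m21 (F y s)) x t) (pdt (fun y s => m22 (F y s)) x t).

Definition Qmat (q : C) : M2 := mkM2 0 (Ci * q) (Ci * Cconj q) 0.

Definition Umat (q lam : C) : M2 :=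
  M2add (M2scal (-(2) * Ci * lam * lam) sigma3) (M2scal (2 * lam) (Qmat q)).

(** V(Q;lambda) = (4 lambda^2 + 2 Q^2) U + 2 i sigma3 Q_x lambda,
    where q = u and qx = u_x at the point. *)
Definition Vmat (q qx lam : C) : M2 :=
  M2add (M2mul (M2add (M2scal (4 * lam * lam) (mkM2 1 0 0 1))
                      (M2scal 2 (M2mul (Qmat q) (Qmat q))))
               (Umat q lam))
        (M2scal (2 * Ci * lam) (M2mul sigma3 (Qmat qx))).

Definition Lmat (s1 alpha4 : R) (q qx lam : C) : M2 :=
  M2add (M2add (M2scal (- (Ci / 8)) (Vmat q qx lam))
               (M2scal (Ci * RtoC s1 / 4) (Umat q lam)))
        (M2scal (RtoC alpha4) sigma3).

Close Scope C_scope.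

Definition Rpoly (s1 s2 s3 alpha4 nu : R) : R :=
  nu ^ 4 + 4 * s1 * nu ^ 3
  + (6 * s1 ^ 2 - 8 * s2 + 48 * alpha4) * nu ^ 2
  + (4 * s1 ^ 3 - 16 * s1 * s2 + 64 * s3 + 32 * s1 * alpha4) * nu
  + (- s1 ^ 2 + 4 * s2 + 8 * alpha4) ^ 2.

(* Main.v *)
Require Import Defs.
From Stdlib Require Import Reals.
From Coquelicot Require Import Coquelicot.
From Stdlib Require Import Lra List.
Open Scope R_scope.

Definition nuq (q : C) := fst q ^ 2 + snd q ^ 2.
Definition cq s1 q := (nuq q + s1) / 2.
Definition Kq (q qx : C) := (fst qx * snd q - snd qx * fst q) / 2.
Definition Wq (qx : C) := fst qx ^ 2 + snd qx ^ 2.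
Definition E4 s1 alpha4 q qx := - cq s1 q ^ 2 + 2 * alpha4 + 2 * cq s1 q * nuq q - Kq q qx.
Definition E2 s1 alpha4 q qx := -2 * cq s1 q * alpha4 - nuq q * cq s1 q ^ 2 - Wq qx / 16 + cq s1 q * Kq q qx.

Lemma ode_alg s1 alpha4 q qx :
  (2 * (fst q * fst qx + snd q * snd qx)) ^ 2 =
  - Rpoly s1 (- E4 s1 alpha4 q qx) (E2 s1 alpha4 q qx) alpha4 (nuq q).
Proof.
  destruct q as [a b]; destruct qx as [p r].
  unfold Rpoly, E4, E2, cq, Kq, Wq, nuq; simpl. field.
Qed.

Definition bet : C := (Ci * RtoC (/4))%C.

Ltac entry_tac := cbn [m11 m12 m21 m22 Lmat Vmat Umat Qmat sigma3 M2add M2scal M2mul];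
  repeat match goal with z : C |- _ => destruct z end;
  unfold bet, cq, nuq; apply injective_projections; cbn -[Rdiv]; field.

Lemma L11e s1 a4 q qx lam :
  m11 (Lmat s1 a4 q qx lam) = (- lam ^ 4 + RtoC (cq s1 q) * lam ^ 2 + RtoC a4)%C.
Proof. entry_tac. Qed.
Lemma L12e s1 a4 q qx lam :
  m12 (Lmat s1 a4 q qx lam) = ((lam ^ 3 - RtoC (cq s1 q) * lam) * q + bet * lam * qx)%C.
Proof. entry_tac. Qed.
Lemma L21e s1 a4 q qx lam :
  m21 (Lmat s1 a4 q qx lam) = ((lam ^ 3 - RtoC (cq s1 q) * lam) * Cconj q - bet * lam * Cconj qx)%C.
Proof. entry_tac. Qed.
Lemma L22e s1 a4 q qx lam :
  m22 (Lmat s1 a4 q qx lam) = (- (- lam ^ 4 + RtoC (cq s1 q) * lam ^ 2 + RtoC a4))%C.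
Proof. entry_tac. Qed.

Lemma det_ring (lam q qc qx qxc Cc A : C) :
  (let L11 := - lam ^ 4 + Cc * lam ^ 2 + A in
   L11 * (- L11) - ((lam ^ 3 - Cc * lam) * q + bet * lam * qx) *
                   ((lam ^ 3 - Cc * lam) * qc - bet * lam * qxc)
  = - lam ^ 8 + (2 * Cc - q * qc) * lam ^ 6
    + (- (Cc * Cc - 2 * A) + 2 * Cc * (q * qc) - bet * (qx * qc - q * qxc)) * lam ^ 4
    + (- 2 * Cc * A - Cc * Cc * (q * qc) + Cc * (bet * (qx * qc - q * qxc)) + bet * bet * (qx * qxc)) * lam ^ 2
    - A * A)%C.
Proof. simpl. ring. Qed.

Lemma coef6 s1 q : (2 * RtoC (cq s1 q) - q * Cconj q)%C = RtoC s1.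
Proof. destruct q as [a b]; unfold cq, nuq; apply injective_projections; cbn -[Rdiv]; field. Qed.

Lemma coef4 s1 a4 q qx :
  (- (RtoC (cq s1 q) * RtoC (cq s1 q) - 2 * RtoC a4) + 2 * RtoC (cq s1 q) * (q * Cconj q)
   - bet * (qx * Cconj q - q * Cconj qx))%C = RtoC (E4 s1 a4 q qx).
Proof. destruct q as [a b]; destruct qx as [p r]; unfold E4, Kq, cq, nuq, bet;
  apply injective_projections; cbn -[Rdiv]; field. Qed.

Lemma coef2 s1 a4 q qx :
  (- 2 * RtoC (cq s1 q) * RtoC a4 - RtoC (cq s1 q) * RtoC (cq s1 q) * (q * Cconj q)
   + RtoC (cq s1 q) * (bet * (qx * Cconj q - q * Cconj qx)) + bet * bet * (qx * Cconj qx))%C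
  = RtoC (E2 s1 a4 q qx).
Proof. destruct q as [a b]; destruct qx as [p r]; unfold E2, Kq, Wq, cq, nuq, bet;
  apply injective_projections; cbn -[Rdiv]; field. Qed.

Lemma coef0 a4 : (RtoC a4 * RtoC a4)%C = RtoC (a4 ^ 2).
Proof. apply injective_projections; cbn; ring. Qed.

Lemma det_alg s1 alpha4 q qx lam :
  M2det (Lmat s1 alpha4 q qx lam) =
  (- lam ^ 8 + RtoC s1 * lam ^ 6 + RtoC (E4 s1 alpha4 q qx) * lam ^ 4
   + RtoC (E2 s1 alpha4 q qx) * lam ^ 2 - RtoC (alpha4 ^ 2))%C.
Proof.
  unfold M2det. rewrite L11e, L12e, L21e, L22e.
  rewrite (det_ring lam q (Cconj q) qx (Cconj qx) (RtoC (cq s1 q)) (RtoC alpha4)).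
  rewrite coef6, coef4, coef2, coef0. reflexivity.
Qed.

Lemma L11_fst s1 a4 q qx :
  fst (m11 (Lmat s1 a4 q qx (RtoC 1))) = -1 + (nuq q + s1) / 2 + a4.
Proof.
  rewrite L11e. unfold cq. cbn -[Rdiv]. field.
Qed.

Lemma VU11 s1 a4 q qx :
  m11 (M2comm (Vmat q qx (RtoC 1)) (Lmat s1 a4 q qx (RtoC 1))) =
  (RtoC (2 * s1) * m11 (M2comm (Umat q (RtoC 1)) (Lmat s1 a4 q qx (RtoC 1))))%C.
Proof.
  cbn [m11 m12 m21 m22 M2comm M2sub Lmat Vmat Umat Qmat sigma3 M2add M2scal M2mul].
  destruct q as [a b]; destruct qx as [p r].
  apply injective_projections; cbn -[Rdiv]; field.
Qed.

Definition dC (f : R -> C) (x : R) : C :=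
  (Derive (fun y => fst (f y)) x, Derive (fun y => snd (f y)) x).
Definition DxC (f : R -> C) (x : R) : Prop :=
  ex_derive (fun y => fst (f y)) x /\ ex_derive (fun y => snd (f y)) x.

Lemma Dx_const (c : C) x : DxC (fun _ => c) x.
Proof. split; apply ex_derive_const. Qed.

Lemma Dx_plus f g x : DxC f x -> DxC g x -> DxC (fun y => f y + g y)%C x.
Proof. intros [Hf1 Hf2] [Hg1 Hg2]; split; simpl.
  - exact (ex_derive_plus (fun y => fst (f y)) (fun y => fst (g y)) x Hf1 Hg1).
  - exact (ex_derive_plus (fun y => snd (f y)) (fun y => snd (g y)) x Hf2 Hg2). Qed.

Lemma Dx_opp f x : DxC f x -> DxC (fun y => - f y)%C x.
Proof. intros [Hf1 Hf2]; split; simpl.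
  - exact (ex_derive_opp (fun y => fst (f y)) x Hf1).
  - exact (ex_derive_opp (fun y => snd (f y)) x Hf2). Qed.

Lemma Dx_minus f g x : DxC f x -> DxC g x -> DxC (fun y => f y - g y)%C x.
Proof. intros; unfold Cminus; apply Dx_plus; auto; apply Dx_opp; auto. Qed.

Lemma Dx_mult f g x : DxC f x -> DxC g x -> DxC (fun y => f y * g y)%C x.
Proof. intros [? ?] [? ?]; split; simpl.
  - apply (ex_derive_minus (fun y => fst (f y) * fst (g y)) (fun y => snd (f y) * snd (g y))); apply ex_derive_mult; auto.
  - apply (ex_derive_plus (fun y => fst (f y) * snd (g y)) (fun y => snd (f y) * fst (g y))); apply ex_derive_mult; auto. Qed.

Lemma Dx_conj f x : DxC f x -> DxC (fun y => Cconj (f y)) x.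
Proof. intros [Hf1 Hf2]; split; simpl; auto.
  exact (ex_derive_opp (fun y => snd (f y)) x Hf2). Qed.

Lemma dC_plus f g x : DxC f x -> DxC g x -> dC (fun y => f y + g y)%C x = (dC f x + dC g x)%C.
Proof. intros [? ?] [? ?]; unfold dC; simpl.
  rewrite (Derive_plus (fun y => fst (f y)) (fun y => fst (g y))); auto.
  rewrite (Derive_plus (fun y => snd (f y)) (fun y => snd (g y))); auto. Qed.

Lemma dC_opp f x : dC (fun y => - f y)%C x = (- dC f x)%C.
Proof. unfold dC; simpl.
  rewrite (Derive_opp (fun y => fst (f y))).
  rewrite (Derive_opp (fun y => snd (f y))). reflexivity. Qed.

Lemma dC_minus f g x : DxC f x -> DxC g x -> dC (fun y => f y - g y)%C x = (dC f x - dC g x)%C.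
Proof. intros; unfold Cminus. rewrite dC_plus; auto. rewrite dC_opp; auto. apply Dx_opp; auto. Qed.

Lemma dC_mult f g x : DxC f x -> DxC g x ->
  dC (fun y => f y * g y)%C x = (dC f x * g x + f x * dC g x)%C.
Proof. intros [? ?] [? ?]; unfold dC; simpl.
  rewrite (Derive_minus (fun y => fst (f y) * fst (g y)) (fun y => snd (f y) * snd (g y))); try (apply ex_derive_mult; auto).
  rewrite (Derive_plus (fun y => fst (f y) * snd (g y)) (fun y => snd (f y) * fst (g y))); try (apply ex_derive_mult; auto).
  rewrite (Derive_mult (fun y => fst (f y)) (fun y => fst (g y))); auto.
  rewrite (Derive_mult (fun y => snd (f y)) (fun y => snd (g y))); auto.
  rewrite (Derive_mult (fun y => fst (f y)) (fun y => snd (g y))); auto.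
  rewrite (Derive_mult (fun y => snd (f y)) (fun y => fst (g y))); auto.
  apply injective_projections; simpl; ring. Qed.

Ltac stepD := match goal with
  | |- DxC (fun _ => ?c) _ => apply Dx_const
  | |- DxC (fun y => (_ + _)%C) _ => apply Dx_plus
  | |- DxC (fun y => (_ - _)%C) _ => apply Dx_minus
  | |- DxC (fun y => (_ * _)%C) _ => apply Dx_mult
  | |- DxC (fun y => (- _)%C) _ => apply Dx_opp
  | |- DxC (fun y => Cconj _) _ => apply Dx_conj
  | |- _ => assumption
  end.
Ltac solveD := cbn [m11 m12 m21 m22 Lmat Vmat Umat Qmat sigma3 M2add M2scal M2mul];
  repeat stepD.

Lemma Dx_L s1 a4 (q qx : R -> C) lam x : DxC q x -> DxC qx x ->
  DxC (fun y => m11 (Lmat s1 a4 (q y) (qx y) lam)) x /\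
  DxC (fun y => m12 (Lmat s1 a4 (q y) (qx y) lam)) x /\
  DxC (fun y => m21 (Lmat s1 a4 (q y) (qx y) lam)) x /\
  DxC (fun y => m22 (Lmat s1 a4 (q y) (qx y) lam)) x.
Proof. intros Hq Hqx. split; [|split; [|split]]; solveD. Qed.

Lemma comm_trace (U L : M2) :
  (m11 (M2comm U L) * m22 L + m11 L * m22 (M2comm U L)
   - (m12 (M2comm U L) * m21 L + m12 L * m21 (M2comm U L)))%C = 0%C.
Proof. destruct U, L; unfold M2comm, M2sub, M2mul; cbn -[Cmult Cplus Cminus Copp]; ring. Qed.

Lemma Dx_det (G : R -> M2) x :
  DxC (fun y => m11 (G y)) x -> DxC (fun y => m12 (G y)) x ->
  DxC (fun y => m21 (G y)) x -> DxC (fun y => m22 (G y)) x ->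
  DxC (fun y => M2det (G y)) x /\
  dC (fun y => M2det (G y)) x =
  (dC (fun y => m11 (G y)) x * m22 (G x) + m11 (G x) * dC (fun y => m22 (G y)) x
   - (dC (fun y => m12 (G y)) x * m21 (G x) + m12 (G x) * dC (fun y => m21 (G y)) x))%C.
Proof. intros H11 H12 H21 H22. unfold M2det. split.
  - apply Dx_minus; apply Dx_mult; auto.
  - rewrite (dC_minus (fun y => m11 (G y) * m22 (G y))%C (fun y => m12 (G y) * m21 (G y))%C)
      by (apply Dx_mult; auto).
    rewrite (dC_mult (fun y => m11 (G y)) (fun y => m22 (G y))) by auto.
    rewrite (dC_mult (fun y => m12 (G y)) (fun y => m21 (G y))) by auto.
    reflexivity.
Qed.

Lemma const_deriv0 (f : R -> R) :
  (forall y, ex_derive f y /\ Derive f y = 0) -> forall a b, f a = f b.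
Proof.
  intros H.
  assert (K : forall a b, a < b -> f a = f b).
  { intros a b Hab. apply (eq_is_derive f a b); auto.
    intros y _. destruct (H y) as [H1 H2]. pose proof (Derive_correct f y H1) as H3. rewrite H2 in H3. exact H3. }
  intros a b. destruct (Rtotal_order a b) as [h|[h|h]].
  - auto.
  - subst; auto.
  - symmetry; auto.
Qed.

Lemma det_const_1d (G U : R -> M2) :
  (forall y, DxC (fun z => m11 (G z)) y /\ DxC (fun z => m12 (G z)) y /\
             DxC (fun z => m21 (G z)) y /\ DxC (fun z => m22 (G z)) y) ->
  (forall y, dC (fun z => m11 (G z)) y = m11 (M2comm (U y) (G y)) /\
             dC (fun z => m12 (G z)) y = m12 (M2comm (U y) (G y)) /\
             dC (fun z => m21 (G z)) y = m21 (M2comm (U y) (G y)) /\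
             dC (fun z => m22 (G z)) y = m22 (M2comm (U y) (G y))) ->
  forall a b, M2det (G a) = M2det (G b).
Proof.
  intros HD HC.
  assert (E : forall y, DxC (fun z => M2det (G z)) y /\ dC (fun z => M2det (G z)) y = 0%C).
  { intros y. destruct (HD y) as [h11 [h12 [h21 h22]]].
    destruct (Dx_det G y h11 h12 h21 h22) as [HDd HDe]. split; auto.
    rewrite HDe. destruct (HC y) as [e11 [e12 [e21 e22]]].
    rewrite e11, e12, e21, e22. apply comm_trace. }
  intros a b. apply injective_projections.
  - apply (const_deriv0 (fun z => fst (M2det (G z)))). intros y.
    destruct (E y) as [[h _] e]. split; auto. exact (f_equal fst e).
  - apply (const_deriv0 (fun z => snd (M2det (G z)))). intros y.
    destruct (E y) as [[_ h] e]. split; auto. exact (f_equal snd e).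
Qed.

Lemma sm_Dx (u : R -> R -> C) : smooth2 u -> forall x t,
  DxC (fun y => u y t) x /\ DxC (fun y => pdx u y t) x /\
  DxC (fun s => u x s) t /\ DxC (fun s => pdx u x s) t.
Proof.
  intros H x t. destruct (H nil) as [H1 [H2 _]]. destruct (H (true :: nil)) as [H3 [H4 _]].
  simpl in H1, H2, H3, H4. unfold ex_pdx, ex_pdt in *.
  split; [|split; [|split]]; unfold DxC; auto.
Qed.

Lemma cont2 (f : R -> R -> C) x t :
  continuous (fun p : R * R => f (fst p) (snd p)) (x, t) ->
  continuity_2d_pt (fun a b => fst (f a b)) x t /\ continuity_2d_pt (fun a b => snd (f a b)) x t.
Proof.
  intros H. split; apply continuity_2d_pt_filterlim.
  - apply (filterlim_comp _ _ _ (fun p : R * R => f (fst p) (snd p)) fst (locally (x, t)) (locally (f x t))).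
    + exact H.
    + destruct (f x t) as [a b]. apply (continuous_fst (U := R_UniformSpace) (V := R_UniformSpace) a b).
  - apply (filterlim_comp _ _ _ (fun p : R * R => f (fst p) (snd p)) snd (locally (x, t)) (locally (f x t))).
    + exact H.
    + destruct (f x t) as [a b]. apply (continuous_snd (U := R_UniformSpace) (V := R_UniformSpace) a b).
Qed.

Lemma sm_cont (u : R -> R -> C) : smooth2 u -> forall x t,
  continuity_2d_pt (fun a b => fst (u a b)) x t /\ continuity_2d_pt (fun a b => snd (u a b)) x t /\
  continuity_2d_pt (fun a b => fst (pdx u a b)) x t /\ continuity_2d_pt (fun a b => snd (pdx u a b)) x t.
Proof.
  intros H x t. destruct (H nil) as [_ [_ H1]]. destruct (H (true :: nil)) as [_ [_ H2]].
  simpl in H1, H2. destruct (cont2 u x t (H1 x t)). destruct (cont2 (pdx u) x t (H2 x t)). auto.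
Qed.

Lemma abs_between c x u : Rmin x u <= c <= Rmax x u -> Rabs (c - x) <= Rabs (u - x).
Proof. unfold Rmin, Rmax; destruct (Rle_dec x u); intros [];
  unfold Rabs; repeat destruct Rcase_abs; lra. Qed.

Lemma diff_partials (f fx fy : R -> R -> R) x y :
  (forall a b, is_derive (fun z => f z b) a (fx a b)) ->
  (forall a b, is_derive (fun z => f a z) b (fy a b)) ->
  continuity_2d_pt fx x y ->
  differentiable_pt_lim f x y (fx x y) (fy x y).
Proof.
  intros Hx Hy Hc eps.
  destruct (Hc (pos_div_2 eps)) as [d1 Hd1].
  pose proof (Hy x y) as Hyy. apply is_derive_Reals in Hyy.
  assert (Ep : 0 < eps / 2) by (destruct eps; simpl; lra).
  destruct (Hyy (eps/2) Ep) as [d2 Hd2].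
  assert (Dp : 0 < Rmin d1 d2) by (apply Rmin_pos; [destruct d1|destruct d2]; simpl; auto).
  exists (mkposreal _ Dp). simpl. intros u v Hu Hv.
  assert (Hu1 : Rabs (u - x) < d1) by (eapply Rlt_le_trans; [apply Hu | apply Rmin_l]).
  assert (Hv1 : Rabs (v - y) < d1) by (eapply Rlt_le_trans; [apply Hv | apply Rmin_l]).
  assert (Hv2 : Rabs (v - y) < d2) by (eapply Rlt_le_trans; [apply Hv | apply Rmin_r]).
  destruct (MVT_gen (fun z => f z v) x u (fun z => fx z v)) as [c [Hc1 Hc2]].
  { intros; apply Hx. }
  { intros z _. apply continuity_pt_filterlim. apply (ex_derive_continuous (fun z => f z v)).
    exists (fx z v). apply Hx. }
  simpl in Hc2.
  assert (HA : Rabs (f u v - f x v - fx x y * (u - x)) <= eps / 2 * Rabs (u - x)).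
  { replace (f u v - f x v - fx x y * (u - x)) with ((fx c v - fx x y) * (u - x)) by lra.
    rewrite Rabs_mult. apply Rmult_le_compat_r; [apply Rabs_pos|].
    left. apply (Hd1 c v); auto. eapply Rle_lt_trans; [apply abs_between; exact Hc1| exact Hu1]. }
  assert (HB : Rabs (f x v - f x y - fy x y * (v - y)) <= eps / 2 * Rabs (v - y)).
  { destruct (Req_dec v y) as [e|n].
    - subst. replace (f x y - f x y - fy x y * (y - y)) with 0 by ring.
      rewrite Rabs_R0. replace (y - y) with 0 by ring. rewrite Rabs_R0. lra.
    - assert (nz : v - y <> 0) by lra.
      pose proof (Hd2 (v - y) nz Hv2) as K. replace (y + (v - y)) with v in K by ring.
      replace (f x v - f x y - fy x y * (v - y)) with (((f x v - f x y) / (v - y) - fy x y) * (v - y)) by (field; auto).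
      rewrite Rabs_mult. apply Rmult_le_compat_r; [apply Rabs_pos| left; exact K]. }
  replace (f u v - f x y - (fx x y * (u - x) + fy x y * (v - y)))
    with ((f u v - f x v - fx x y * (u - x)) + (f x v - f x y - fy x y * (v - y))) by ring.
  eapply Rle_trans; [apply Rabs_triang|].
  pose proof (Rmax_l (Rabs (u - x)) (Rabs (v - y))).
  pose proof (Rmax_r (Rabs (u - x)) (Rabs (v - y))).
  assert (0 < eps) by (destruct eps; simpl; auto).
  nra.
Qed.

Lemma nu_deriv f x : DxC f x ->
  is_derive (fun y => nuq (f y)) x (2 * (fst (f x) * fst (dC f x) + snd (f x) * snd (dC f x))).
Proof. intros [H1 H2]. unfold nuq, dC. cbn [fst snd].
  pose proof (Derive_correct _ _ H1) as D1. pose proof (Derive_correct _ _ H2) as D2.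
  apply is_derive_Reals in D1. apply is_derive_Reals in D2.
  pose proof (derivable_pt_lim_plus _ _ _ _ _ (derivable_pt_lim_mult _ _ _ _ _ D1 D1) (derivable_pt_lim_mult _ _ _ _ _ D2 D2)) as D.
  apply (is_derive_ext (fun y => fst (f y) * fst (f y) + snd (f y) * snd (f y))).
  { intros t. cbv beta. change (fst (f t) * fst (f t) + snd (f t) * snd (f t) = fst (f t) ^ 2 + snd (f t) ^ 2). ring. }
  apply is_derive_Reals. cbv beta in D.
  match goal with |- derivable_pt_lim _ _ ?v => match type of D with derivable_pt_lim _ _ ?w =>
    assert (E : @eq R w v) end end.
  { set (d1 := Derive (fun y : R => fst (f y)) x) in *; set (d2 := Derive (fun y : R => snd (f y)) x) in *. replace (Derive (fun y : R_AbsRing => fst (f y)) x) with d1 by reflexivity. replace (Derive (fun y : R_AbsRing => snd (f y)) x) with d2 by reflexivity. ring. }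
  rewrite <- E.
  exact D.
Qed.

Lemma det_real s1 a4 q qx (l : R) :
  M2det (Lmat s1 a4 q qx (RtoC l)) =
  RtoC (- l ^ 8 + s1 * l ^ 6 + E4 s1 a4 q qx * l ^ 4 + E2 s1 a4 q qx * l ^ 2 - a4 ^ 2).
Proof. rewrite det_alg. apply injective_projections; simpl; ring. Qed.

Lemma half_lemma (g : R -> R) x d s1 a4 : is_derive g x d -> is_derive (fun y => -1 + (g y + s1)/2 + a4) x (d/2).
Proof. intros Hg. auto_derive. exists d; auto. change (Derive (fun x0 => g x0) x) with (Derive g x). rewrite (is_derive_unique _ _ _ Hg). field. Qed.

Section S.
Variables (u : R -> R -> C) (s1 alpha4 : R).
Hypothesis Hsm : smooth2 u.
Hypothesis Hlax : forall lam : C, forall x t,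
     M2pdx (fun y s => Lmat s1 alpha4 (u y s) (pdx u y s) lam) x t
     = M2comm (Umat (u x t) lam) (Lmat s1 alpha4 (u x t) (pdx u x t) lam) /\
     M2pdt (fun y s => Lmat s1 alpha4 (u y s) (pdx u y s) lam) x t
     = M2comm (Vmat (u x t) (pdx u x t) lam) (Lmat s1 alpha4 (u x t) (pdx u x t) lam).

Lemma det_const lam x t :
  M2det (Lmat s1 alpha4 (u x t) (pdx u x t) lam) = M2det (Lmat s1 alpha4 (u 0 0) (pdx u 0 0) lam).
Proof.
  transitivity (M2det (Lmat s1 alpha4 (u 0 t) (pdx u 0 t) lam)).
  - apply (det_const_1d (fun y => Lmat s1 alpha4 (u y t) (pdx u y t) lam)
                        (fun y => Umat (u y t) lam)).
    + intros y. destruct (sm_Dx u Hsm y t) as [h1 [h2 _]].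
      apply (Dx_L s1 alpha4 (fun z => u z t) (fun z => pdx u z t) lam y h1 h2).
    + intros y. destruct (Hlax lam y t) as [e _].
      split; [|split; [|split]].
      * exact (f_equal m11 e).
      * exact (f_equal m12 e).
      * exact (f_equal m21 e).
      * exact (f_equal m22 e).
  - apply (det_const_1d (fun s => Lmat s1 alpha4 (u 0 s) (pdx u 0 s) lam)
                        (fun s => Vmat (u 0 s) (pdx u 0 s) lam)).
    + intros y. destruct (sm_Dx u Hsm 0 y) as [_ [_ [h1 h2]]].
      apply (Dx_L s1 alpha4 (fun z => u 0 z) (fun z => pdx u 0 z) lam y h1 h2).
    + intros y. destruct (Hlax lam 0 y) as [_ e].
      split; [|split; [|split]].
      * exact (f_equal m11 e).
      * exact (f_equal m12 e).
      * exact (f_equal m21 e).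
      * exact (f_equal m22 e).
Qed.

Lemma E_const x t :
  E4 s1 alpha4 (u x t) (pdx u x t) = E4 s1 alpha4 (u 0 0) (pdx u 0 0) /\
  E2 s1 alpha4 (u x t) (pdx u x t) = E2 s1 alpha4 (u 0 0) (pdx u 0 0).
Proof.
  pose proof (det_const (RtoC 1) x t) as e1. pose proof (det_const (RtoC 2) x t) as e2.
  rewrite !det_real in e1, e2. apply (f_equal fst) in e1. apply (f_equal fst) in e2.
  simpl in e1, e2. split; lra.
Qed.

Definition NX x t := 2 * (fst (u x t) * fst (pdx u x t) + snd (u x t) * snd (pdx u x t)).
Definition NT x t := 2 * (fst (u x t) * fst (pdt u x t) + snd (u x t) * snd (pdt u x t)).

Lemma fst_RtoC_mult a z : fst (RtoC a * z)%C = a * fst z.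
Proof. destruct z; simpl; ring. Qed.

Lemma NT_NX x t : NT x t = 2 * s1 * NX x t.
Proof.
  destruct (Hlax (RtoC 1) x t) as [ex et].
  pose proof (f_equal (fun M => fst (m11 M)) ex) as Ex. cbv beta in Ex.
  pose proof (f_equal (fun M => fst (m11 M)) et) as Et. cbv beta in Et.
  rewrite VU11, fst_RtoC_mult in Et.
  destruct (sm_Dx u Hsm x t) as [h1 [_ [h3 _]]].
  assert (Dxv : fst (m11 (M2pdx (fun y s => Lmat s1 alpha4 (u y s) (pdx u y s) (RtoC 1)) x t)) = NX x t / 2).
  { change (Derive (fun y => fst (m11 (Lmat s1 alpha4 (u y t) (pdx u y t) (RtoC 1)))) x = NX x t / 2).
    rewrite (Derive_ext _ (fun y => -1 + (nuq (u y t) + s1) / 2 + alpha4)) by (intros; apply L11_fst).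
    apply is_derive_unique. pose proof (nu_deriv (fun y => u y t) x h1) as K.
    exact (half_lemma (fun y => nuq (u y t)) _ _ s1 alpha4 K). }
  assert (Dtv : fst (m11 (M2pdt (fun y s => Lmat s1 alpha4 (u y s) (pdx u y s) (RtoC 1)) x t)) = NT x t / 2).
  { change (Derive (fun s => fst (m11 (Lmat s1 alpha4 (u x s) (pdx u x s) (RtoC 1)))) t = NT x t / 2).
    rewrite (Derive_ext _ (fun s => -1 + (nuq (u x s) + s1) / 2 + alpha4)) by (intros; apply L11_fst).
    apply is_derive_unique. pose proof (nu_deriv (fun s => u x s) t h3) as K.
    exact (half_lemma (fun s => nuq (u x s)) _ _ s1 alpha4 K). }
  rewrite Dxv in Ex. rewrite Dtv in Et. rewrite <- Ex in Et. lra.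
Qed.

End S.

Lemma lin_deriv (xi k tau : R) : derivable_pt_lim (fun s => xi - k * s) tau (- k).
Proof. apply is_derive_Reals. auto_derive; auto. ring. Qed.

Lemma id_deriv (tau : R) : derivable_pt_lim (fun s => s) tau 1.
Proof. apply is_derive_Reals. auto_derive; auto. Qed.

Section T.
Variables (u : R -> R -> C) (s1 alpha4 : R).
Hypothesis Hsm : smooth2 u.
Hypothesis Hlax : forall lam : C, forall x t,
     M2pdx (fun y s => Lmat s1 alpha4 (u y s) (pdx u y s) lam) x t
     = M2comm (Umat (u x t) lam) (Lmat s1 alpha4 (u x t) (pdx u x t) lam) /\
     M2pdt (fun y s => Lmat s1 alpha4 (u y s) (pdx u y s) lam) x t
     = M2comm (Vmat (u x t) (pdx u x t) lam) (Lmat s1 alpha4 (u x t) (pdx u x t) lam).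

Lemma partX a b : is_derive (fun z => nuq (u z b)) a (NX u a b).
Proof. destruct (sm_Dx u Hsm a b) as [h _]. exact (nu_deriv _ _ h). Qed.

Lemma partT a b : is_derive (fun z => nuq (u a z)) b (NT u a b).
Proof. destruct (sm_Dx u Hsm a b) as [_ [_ [h _]]]. exact (nu_deriv _ _ h). Qed.

Lemma NX_cont a b : continuity_2d_pt (NX u) a b.
Proof.
  destruct (sm_cont u Hsm a b) as [c1 [c2 [c3 c4]]]. unfold NX.
  apply (continuity_2d_pt_mult (fun _ _ => 2)
    (fun a b => fst (u a b) * fst (pdx u a b) + snd (u a b) * snd (pdx u a b))).
  - apply continuity_2d_pt_const.
  - apply (continuity_2d_pt_plus (fun a b => fst (u a b) * fst (pdx u a b))
                                 (fun a b => snd (u a b) * snd (pdx u a b))).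
    + apply (continuity_2d_pt_mult (fun a b => fst (u a b)) (fun a b => fst (pdx u a b))); auto.
    + apply (continuity_2d_pt_mult (fun a b => snd (u a b)) (fun a b => snd (pdx u a b))); auto.
Qed.

Lemma transport x t : nuq (u x t) = nuq (u (x + 2 * s1 * t) 0).
Proof.
  set (xi := x + 2 * s1 * t).
  set (g := fun s => nuq (u (xi - 2 * s1 * s) s)).
  assert (G : forall s, ex_derive g s /\ Derive g s = 0).
  { intros s.
    assert (D : derivable_pt_lim g s 0).
    { pose proof (diff_partials (fun a b => nuq (u a b)) (NX u) (NT u) (xi - 2 * s1 * s) s
                   partX partT (NX_cont _ _)) as Df.
      pose proof (derivable_pt_lim_comp_2d (fun a b => nuq (u a b)) (fun s => xi - 2 * s1 * s) (fun s => s)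
                   s _ _ _ _ Df (lin_deriv xi (2 * s1) s) (id_deriv s)) as Dc.
      rewrite (NT_NX u s1 alpha4 Hsm Hlax) in Dc.
      replace (NX u (xi - 2 * s1 * s) s * - (2 * s1) + 2 * s1 * NX u (xi - 2 * s1 * s) s * 1) with 0 in Dc by ring.
      exact Dc. }
    apply is_derive_Reals in D. split.
    - exists 0. exact D.
    - exact (is_derive_unique _ _ _ D). }
  pose proof (const_deriv0 g G t 0) as E. unfold g in E.
  replace (xi - 2 * s1 * t) with x in E by (unfold xi; ring).
  replace (xi - 2 * s1 * 0) with xi in E by ring.
  exact E.
Qed.

End T.

Theorem mainTheorem5 (u : R -> R -> C) (s1 alpha4 : R) :
  smooth2 u ->
  (forall x t, u x t <> 0%C) ->
  (forall x t,
     (Ci * pdt u x t + pdx (pdx u) x t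
      + 2 * Ci * pdx (fun y s => RtoC (Cmod (u y s) ^ 2) * u y s) x t)%C = 0%C) ->
  (forall lam : C, forall x t,
     M2pdx (fun y s => Lmat s1 alpha4 (u y s) (pdx u y s) lam) x t
     = M2comm (Umat (u x t) lam) (Lmat s1 alpha4 (u x t) (pdx u x t) lam) /\
     M2pdt (fun y s => Lmat s1 alpha4 (u y s) (pdx u y s) lam) x t
     = M2comm (Vmat (u x t) (pdx u x t) lam) (Lmat s1 alpha4 (u x t) (pdx u x t) lam)) ->
  exists s2 s3 s4 : R,
    (forall (lam : C) x t,
       M2det (Lmat s1 alpha4 (u x t) (pdx u x t) lam)
       = (- lam ^ 8 + RtoC s1 * lam ^ 6 - RtoC s2 * lam ^ 4
          + RtoC s3 * lam ^ 2 - RtoC s4)%C) /\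
    exists N : R -> R,
      (forall x t, Cmod (u x t) ^ 2 = N (x + 2 * s1 * t)) /\
      (forall xi, ex_derive N xi /\ (Derive N xi) ^ 2 = - Rpoly s1 s2 s3 alpha4 (N xi)).
Proof.
  intros Hsm _ _ Hlax.
  exists (- E4 s1 alpha4 (u 0 0) (pdx u 0 0)), (E2 s1 alpha4 (u 0 0) (pdx u 0 0)), (alpha4 ^ 2).
  split.
  - intros lam x t. rewrite det_alg.
    destruct (E_const u s1 alpha4 Hsm Hlax x t) as [e4 e2]. rewrite e4, e2.
    rewrite RtoC_opp. ring.
  - exists (fun xi => nuq (u xi 0)). split.
    + intros x t. rewrite <- (transport u s1 alpha4 Hsm Hlax x t).
      unfold Cmod, nuq. rewrite pow2_sqrt; [reflexivity|].
      pose proof (pow2_ge_0 (fst (u x t))). pose proof (pow2_ge_0 (snd (u x t))). lra.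
    + intros xi. pose proof (partX u Hsm xi 0) as K. split.
      * exists (NX u xi 0). exact K.
      * assert (Dv : Derive (fun z : R => nuq (u z 0)) xi = NX u xi 0) by exact (is_derive_unique _ _ _ K). rewrite Dv. unfold NX.
        rewrite (ode_alg s1 alpha4 (u xi 0) (pdx u xi 0)).
        destruct (E_const u s1 alpha4 Hsm Hlax xi 0) as [e4 e2]. rewrite e4, e2. reflexivity.
Qed.
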